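(* The sequence $1\to\mathrm{Iso}(\mathbb U^\prec)\xrightarrow{i^\prec}\mathrm{Aut}(\mathbb U^\prec)\xrightarrow{\pi^\prec}\mathrm{Aut}(\mathbb Q_{\ge0})\to1$ is a short exact sequence of topological groups, where $i^\prec$ is the inclusion and $\pi^\prec(f)=D_f$. Moreover, $\pi^\prec$ admits a continuous homomorphic section and induces an isomorphism of topological groups $\mathrm{Aut}(\mathbb U^\prec)\cong\mathrm{Iso}(\mathbb U^\prec)\rtimes\mathrm{Aut}(\mathbb Q_{\ge0})$.
   Context: A two-sorted ultrametric space is $(X,d,D)$ with $D$ a linear order with least element $0$ and $d$ an ultrametric with values in $D$. A convex order is a linear order of the points in which every ball is convex. $\mathbb U^\prec$ is the Fraïssé limit of the class of finite convexly ordered two-sorted ultrametric spaces with order-preserving dc-embeddings (dc-embedding: injection $f$ with order embedding $D_f$ of distance sets fixing $0$ and $d(f(x),f(x'))=D_f(d(x,x'))$); its distance set is $\mathbb Q_{\ge0}$. $\mathrm{Aut}(\mathbb U^\prec)$ is its group of order-preserving dc-automorphisms with the topology of pointwise convergence on both sorts, $\mathrm{Iso}(\mathbb U^\prec)$ the closed subgroup of those with $D_f=\mathrm{id}$. A short exact sequence of topological groups $1\to G_1\xrightarrow{i}H\xrightarrow{\pi}G_2\to1$ means $i$ is a continuous embedding, $\pi$ a continuous open surjective homomorphism, and $i[G_1]=\ker\pi$. The semidirect product $N\rtimes H$ is $N\times H$ with product topology and multiplication $(n,h)(n',h')=(n\,s(h)n's(h)^{-1},hh')$, the isomorphism being $(n,h)\mapsto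 n\,s(h)$ for the section $s$. *)

(* Defs.v *)
From HB Require Import structures.
From mathcomp Require Import all_boot all_order all_algebra.
From Stdlib Require Import ClassicalEpsilon.
From Stdlib Require List.

Set Implicit Arguments. Unset Strict Implicit. Unset Printing Implicit Defensive.
Import Order.TTheory GRing.Theory Num.Theory.
Local Open Scope ring_scope.

Definition qnn : Type := {q : rat | 0 <= q}.
Definition qv (r : qnn) : rat := proj1_sig r.
Definition q0 : qnn := exist (fun q : rat => is_true (0 <= q)) 0 (lexx 0).
Definition qlt (r s : qnn) : Prop := qv r < qv s.
Definition qle (r s : qnn) : Prop := qv r <= qv s.

Definition strict_linear (P : Type) (lt : P -> P -> Prop) : Prop :=
  (forall x, ~ lt x x) /\ (forall x y z, lt x y -> lt y z -> lt x z) /\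
  (forall x y, lt x y \/ x = y \/ lt y x).

Definition ultrametric (P : Type) (d : P -> P -> qnn) : Prop :=
  (forall x y, qv (d x y) = 0 <-> x = y) /\ (forall x y, d x y = d y x) /\
  (forall x y z, qv (d x z) <= Num.max (qv (d x y)) (qv (d y z))).

Definition convex_order (P : Type) (lt : P -> P -> Prop) (d : P -> P -> qnn) : Prop :=
  forall (x : P) (r : qnn) (a b c : P), lt a b -> lt b c ->
    qle (d x a) r -> qle (d x c) r -> qle (d x b) r.

(** The (finite) distance
    sort, a finite linear order with least element 0, is represented (w.l.o.g.) as
    a finite subset [fdist] of Q_{>=0} containing 0. *)
Record fin_space := FinSpace {
  fpt : finType;
  flt : fpt -> fpt -> Prop;
  fd : fpt -> fpt -> qnn;
  fdist : seq qnn }.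

Definition is_fin_cous (B : fin_space) : Prop :=
  strict_linear (@flt B) /\ ultrametric (@fd B) /\ convex_order (@flt B) (@fd B) /\
  List.In q0 (fdist B) /\ (forall x y, List.In (@fd B x y) (fdist B)).

(** Extension property (richness) characterizing the Fraisse limit: every
    order-preserving dc-embedding of a finite substructure (A,E) of the space into
    a finite convexly ordered space B is inverted by an order-preserving
    dc-embedding of B into the space. *)
Definition extension_property (X : Type) (ltX : X -> X -> Prop) (dX : X -> X -> qnn) : Prop :=
  forall (A : seq X) (E : seq qnn),
    List.In q0 E ->
    (forall a a', List.In a A -> List.In a' A -> List.In (dX a a') E) ->
  forall (B : fin_space), is_fin_cous B ->
  forall (eP : X -> fpt B) (eD : qnn -> qnn),
    (forall a a', List.In a A -> List.In a' A -> eP a = eP a' -> a = a') ->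
    (forall a a', List.In a A -> List.In a' A -> ltX a a' -> @flt B (eP a) (eP a')) ->
    (forall r s, List.In r E -> List.In s E -> qlt r s -> qlt (eD r) (eD s)) ->
    eD q0 = q0 ->
    (forall r, List.In r E -> List.In (eD r) (fdist B)) ->
    (forall a a', List.In a A -> List.In a' A -> @fd B (eP a) (eP a') = eD (dX a a')) ->
  exists (gP : fpt B -> X) (gD : qnn -> qnn),
    injective gP /\ (forall b b', @flt B b b' -> ltX (gP b) (gP b')) /\
    (forall r s, List.In r (fdist B) -> List.In s (fdist B) -> qlt r s -> qlt (gD r) (gD s)) /\
    gD q0 = q0 /\
    (forall b b', dX (gP b) (gP b') = gD (@fd B b b')) /\
    (forall a, List.In a A -> gP (eP a) = a) /\
    (forall r, List.In r E -> gD (eD r) = r).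

Definition is_U_prec (X : Type) (ltX : X -> X -> Prop) (dX : X -> X -> qnn) : Prop :=
  (exists c : X -> nat, injective c) /\
  strict_linear ltX /\ ultrametric dX /\ convex_order ltX dX /\
  extension_property ltX dX.

(** Groups.  An element of Aut is a pair (f, D_f). *)
Definition aut_pair (X : Type) : Type := ((X -> X) * (qnn -> qnn))%type.

Definition is_autQ (phi : qnn -> qnn) : Prop :=
  bijective phi /\ (forall r s, qlt (phi r) (phi s) <-> qlt r s).

Definition is_aut (X : Type) (ltX : X -> X -> Prop) (dX : X -> X -> qnn)
    (g : aut_pair X) : Prop :=
  bijective g.1 /\ (forall x y, ltX (g.1 x) (g.1 y) <-> ltX x y) /\
  is_autQ g.2 /\ g.2 q0 = q0 /\
  (forall x y, dX (g.1 x) (g.1 y) = g.2 (dX x y)).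

Definition is_iso (X : Type) (ltX : X -> X -> Prop) (dX : X -> X -> qnn)
    (g : aut_pair X) : Prop :=
  is_aut ltX dX g /\ g.2 = id.

Definition aut_mul (X : Type) (g h : aut_pair X) : aut_pair X := (g.1 \o h.1, g.2 \o h.2).
Definition finv (A : Type) (f : A -> A) : A -> A :=
  fun y => epsilon (inhabits y) (fun x => f x = y).
Definition aut_inv (X : Type) (g : aut_pair X) : aut_pair X := (finv g.1, finv g.2).
Definition autQ_mul (phi psi : qnn -> qnn) : qnn -> qnn := phi \o psi.

(** Topology of pointwise convergence (sorts discrete) on a subset S of T,
    given evaluation maps ev : T -> I -> V. *)
Definition pw_open (T I V : Type) (S : T -> Prop) (ev : T -> I -> V) (U : T -> Prop) : Prop :=
  (forall g, U g -> S g) /\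
  (forall g, U g -> exists s : seq I,
      forall h, S h -> (forall i, List.In i s -> ev h i = ev g i) -> U h).

Definition ev_aut (X : Type) (g : aut_pair X) (i : X + qnn) : X + qnn :=
  match i with inl x => inl (g.1 x) | inr r => inr (g.2 r) end.
Definition ev_autQ (phi : qnn -> qnn) (r : qnn) : qnn := phi r.
Definition ev_prod (T1 I1 V1 T2 I2 V2 : Type) (ev1 : T1 -> I1 -> V1) (ev2 : T2 -> I2 -> V2)
    (p : T1 * T2) (i : I1 + I2) : V1 + V2 :=
  match i with inl j => inl (ev1 p.1 j) | inr j => inr (ev2 p.2 j) end.
Definition prod_set (T1 T2 : Type) (S1 : T1 -> Prop) (S2 : T2 -> Prop) (p : T1 * T2) : Prop :=
  S1 p.1 /\ S2 p.2.

Section Maps.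
Context (T1 I1 V1 T2 I2 V2 : Type) (S1 : T1 -> Prop) (ev1 : T1 -> I1 -> V1)
        (S2 : T2 -> Prop) (ev2 : T2 -> I2 -> V2).

Definition pw_continuous (f : T1 -> T2) : Prop :=
  (forall g, S1 g -> S2 (f g)) /\
  (forall U, pw_open S2 ev2 U -> pw_open S1 ev1 (fun g => S1 g /\ U (f g))).

Definition pw_openmap (f : T1 -> T2) : Prop :=
  forall U, pw_open S1 ev1 U -> pw_open S2 ev2 (fun y => exists g, U g /\ f g = y).

Definition inj_on (f : T1 -> T2) : Prop :=
  forall g g', S1 g -> S1 g' -> f g = f g' -> g = g'.

Definition pw_embedding (f : T1 -> T2) : Prop :=
  pw_continuous f /\ inj_on f /\
  (forall U, pw_open S1 ev1 U -> exists V, pw_open S2 ev2 V /\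
     forall y, (exists g, U g /\ f g = y) <-> (V y /\ exists g, S1 g /\ f g = y)).

Definition pw_homeo (f : T1 -> T2) : Prop :=
  pw_continuous f /\ pw_openmap f /\ inj_on f /\
  (forall y, S2 y -> exists g, S1 g /\ f g = y).

Definition hom_on (m1 : T1 -> T1 -> T1) (m2 : T2 -> T2 -> T2) (f : T1 -> T2) : Prop :=
  forall g h, S1 g -> S1 h -> f (m1 g h) = m2 (f g) (f h).
End Maps.

Definition i_prec (X : Type) (g : aut_pair X) : aut_pair X := g.
Definition pi_prec (X : Type) (g : aut_pair X) : qnn -> qnn := g.2.

Definition sd_mul (X : Type) (s : (qnn -> qnn) -> aut_pair X)
    (p q : aut_pair X * (qnn -> qnn)) : aut_pair X * (qnn -> qnn) :=
  (aut_mul p.1 (aut_mul (s p.2) (aut_mul q.1 (aut_inv (s p.2)))), autQ_mul p.2 q.2).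
Definition sd_map (X : Type) (s : (qnn -> qnn) -> aut_pair X)
    (p : aut_pair X * (qnn -> qnn)) : aut_pair X := aut_mul p.1 (s p.2).

(* Main.v *)
Require Import Defs.
From mathcomp Require Import all_boot all_order all_algebra.
From mathcomp Require Import lra.
From Stdlib Require Import ClassicalEpsilon Classical FunctionalExtensionality ProofIrrelevance.
From Stdlib Require List.
Set Implicit Arguments. Unset Strict Implicit. Unset Printing Implicit Defensive.
Import Order.TTheory GRing.Theory Num.Theory.
Local Open Scope ring_scope.

Lemma qv_inj (a b : qnn) : qv a = qv b -> a = b.
Proof. exact: val_inj. Qed.
Lemma qv_ge0 (a : qnn) : 0 <= qv a.
Proof. exact: (proj2_sig a). Qed.
Lemma qv0 : qv q0 = 0. Proof. by []. Qed.
Lemma qlt_irr a : ~ qlt a a.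
Proof. by rewrite /qlt ltxx. Qed.
Lemma qlt_trans a b c : qlt a b -> qlt b c -> qlt a c.
Proof. rewrite /qlt => h1 h2; lra. Qed.
Lemma qlt_total a b : qlt a b \/ a = b \/ qlt b a.
Proof.
rewrite /qlt; case: (ltgtP (qv a) (qv b)) => h; auto.
by right; left; apply: qv_inj.
Qed.
Lemma qle_lt a b : qle a b <-> (qlt a b \/ a = b).
Proof.
rewrite /qle /qlt; split.
  by rewrite le_eqVlt => /orP [/eqP h|h]; auto; right; apply: qv_inj.
by case=> [h|->]; [apply: ltW|].
Qed.
Lemma qle_nlt a b : qle a b <-> ~ qlt b a.
Proof. rewrite /qle /qlt; split => h; [rewrite ltNge h //| by rewrite leNgt; apply/negP]. Qed.
Lemma qle_antisym a b : qle a b -> qle b a -> a = b.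
Proof. rewrite /qle => h1 h2; apply: qv_inj; lra. Qed.
Lemma qle_trans a b c : qle a b -> qle b c -> qle a c.
Proof. rewrite /qle => h1 h2; lra. Qed.
Lemma qle_refl a : qle a a. Proof. by rewrite /qle. Qed.
Lemma qle0 a : qle q0 a. Proof. exact: qv_ge0. Qed.
Lemma qlt_le a b : qlt a b -> qle a b. Proof. rewrite /qlt /qle => h; lra. Qed.
Lemma qlt_le_trans a b c : qlt a b -> qle b c -> qlt a c.
Proof. rewrite /qle /qlt => h1 h2; lra. Qed.
Lemma qle_lt_trans a b c : qle a b -> qlt b c -> qlt a c.
Proof. rewrite /qle /qlt => h1 h2; lra. Qed.
Lemma qpos a : a <> q0 -> qlt q0 a.
Proof. move=> h; case: (qlt_total q0 a) => [//|[h'|h']]; first by subst.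
by exfalso; move: h'; rewrite /qlt qv0 ltNge qv_ge0. Qed.
Lemma nqlt0 a : ~ qlt a q0.
Proof. by rewrite /qlt qv0 ltNge qv_ge0. Qed.

Definition toq (q : rat) : qnn := insubd q0 q.
Lemma toqK a : toq (qv a) = a.
Proof. by rewrite /toq /qv valKd. Qed.

Lemma qmax_ex (l : seq rat) : forall (P : qnn -> Prop),
  (forall t, P t -> List.In (qv t) l) -> (exists t, P t) ->
  exists r, P r /\ forall t, P t -> qle t r.
Proof.
elim: l => [|c l IH] P Hl [t0 Pt0]; first by case: (Hl _ Pt0).
case: (classic (exists t, P t /\ qv t <> c)) => [Ex|NEx].
  have [r [[Pr _] Hr]] := IH (fun t => P t /\ qv t <> c)
     (fun t '(conj a b) => match Hl t a with or_introl e => False_ind _ (b (esym e)) | or_intror h => h end) Ex.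
  case: (classic (exists t, P t /\ qv t = c)) => [[t [Pt Et]]|NE].
    case: (qlt_total r t) => [lt|[eq|lt]].
    - exists t; split=> // u Pu; case: (classic (qv u = c)) => e.
        by rewrite (qv_inj (etrans e (esym Et))); apply qle_refl.
      by apply: qle_trans (Hr u (conj Pu e)) (qlt_le lt).
    - exists t; split => // u Pu; case: (classic (qv u = c)) => e.
        by rewrite (qv_inj (etrans e (esym Et))); apply qle_refl.
      rewrite -eq; exact: Hr.
    - exists r; split => // u Pu; case: (classic (qv u = c)) => e.
        by rewrite (qv_inj (etrans e (esym Et))); apply qlt_le.
      exact: Hr.
  exists r; split => // u Pu; apply: Hr; split => // e; apply: NE; by exists u.
exists t0; split => // u Pu; have e : qv u = c.
  by apply: NNPP => ne; apply: NEx; exists u.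
have e0 : qv t0 = c by apply: NNPP => ne; apply: NEx; exists t0.
rewrite (qv_inj (etrans e (esym e0))); apply qle_refl.
Qed.

Record M := mkM { mf : qnn -> rat; mf0 : mf q0 = 0;
  mfin : exists s : seq rat, forall t, mf t <> 0 -> List.In (qv t) s }.

Lemma M_ext (a b : M) : (forall t, mf a t = mf b t) -> a = b.
Proof.
case: a => fa fa0 fafin; case: b => fb fb0 fbfin /= H.
have E : fa = fb by apply: functional_extensionality.
subst fb; f_equal; apply: proof_irrelevance.
Qed.

Definition isD (f g : M) (r : qnn) : Prop :=
  (mf f r <> mf g r /\ forall t, mf f t <> mf g t -> qle t r) \/
  ((forall t, mf f t = mf g t) /\ r = q0).

Definition dM (f g : M) : qnn := epsilon (inhabits q0) (isD f g).

Lemma dM_spec f g : isD f g (dM f g).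
Proof.
rewrite /dM; apply: epsilon_spec.
case: (classic (exists t, mf f t <> mf g t)) => [Ex|NEx].
  case: (mfin f) => sf Hf; case: (mfin g) => sg Hg.
  have Hin : forall t, mf f t <> mf g t -> List.In (qv t) (sf ++ sg).
    move=> t h; case: (classic (mf f t = 0)) => e.
      apply: List.in_or_app; right; apply: Hg; by rewrite -e => /esym.
    by apply: List.in_or_app; left; apply: Hf.
  have [r [Pr Hr]] := qmax_ex Hin Ex.
  by exists r; left.
exists q0; right; split => // t; apply: NNPP => ne; apply: NEx; by exists t.
Qed.

Lemma dM_above f g t : qlt (dM f g) t -> mf f t = mf g t.
Proof.
case: (dM_spec f g) => [[_ H]|[H _]] lt //.
apply: NNPP => ne; have := H _ ne; rewrite qle_nlt; exact.
Qed.

Lemma dM_neq f g : f <> g -> mf f (dM f g) <> mf g (dM f g).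
Proof.
case: (dM_spec f g) => [[H _]|[H _]] ne //.
by exfalso; apply: ne; apply: M_ext.
Qed.

Lemma dM_char f g r : mf f r <> mf g r -> (forall t, qlt r t -> mf f t = mf g t) -> dM f g = r.
Proof.
move=> ne ab; case: (dM_spec f g) => [[H1 H2]|[H _]]; last by case: ne.
apply: qle_antisym; last exact: H2.
rewrite qle_nlt => lt; apply: H1; exact: ab.
Qed.

Lemma dM_self f : dM f f = q0.
Proof. by case: (dM_spec f f) => [[H _]|[_ H]]. Qed.

Lemma dM_sym f g : dM f g = dM g f.
Proof.
case: (classic (f = g)) => [->//|ne].
apply: dM_char; first by move=> e; apply: (dM_neq (fun e => ne (esym e))); rewrite e.
by move=> t lt; apply/esym; apply: dM_above.
Qed.

Lemma dM_0 f g : dM f g = q0 -> f = g.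
Proof.
move=> e; apply: NNPP => ne; apply: (dM_neq ne); by rewrite e !mf0.
Qed.


Lemma dM_le f g r : qle (dM f g) r <-> forall t, qlt r t -> mf f t = mf g t.
Proof.
split.
  by move=> h t lt; apply: dM_above; apply: qle_lt_trans h lt.
move=> h; case: (classic (f = g)) => [->|ne]; first by rewrite dM_self; apply: qle0.
rewrite qle_nlt => lt; apply: (dM_neq ne); exact: h.
Qed.

Lemma dM_ultra f g h r : qle (dM f g) r -> qle (dM g h) r -> qle (dM f h) r.
Proof.
rewrite !dM_le => h1 h2 t lt; rewrite h1 // h2 //.
Qed.

Lemma X_ultra_le (X : Type) (d : X -> X -> qnn) : ultrametric d ->
  forall x y z r, qle (d x y) r -> qle (d y z) r -> qle (d x z) r.
Proof.
case=> _ [_ H] x y z r h1 h2; have := H x y z; rewrite /qle in h1 h2 * => h.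
apply: le_trans h _; rewrite ge_max h1 h2 //.
Qed.

Lemma ultra_self (X : Type) (d : X -> X -> qnn) : ultrametric d -> forall x, d x x = q0.
Proof. case=> [H _] x; apply: qv_inj; by apply H. Qed.

Lemma ultra_0 (X : Type) (d : X -> X -> qnn) : ultrametric d -> forall x y, d x y = q0 -> x = y.
Proof. case=> [H _] x y e; apply H; by rewrite e. Qed.

Lemma dM_ultrametric : ultrametric dM.
Proof.
split; first by move=> x y; split => [e|->]; [apply: dM_0; apply: qv_inj | rewrite dM_self].
split; first exact: dM_sym.
move=> x y z.
case/orP: (le_total (qv (dM x y)) (qv (dM y z))) => h.
  have : qle (dM x z) (dM y z) by apply: (dM_ultra (g := y)) => //; apply: qle_refl.
  rewrite /qle => h'; apply: le_trans h' _; rewrite le_max lexx orbT //.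
have : qle (dM x z) (dM x y) by apply: (dM_ultra (g := y)) => //; apply: qle_refl.
rewrite /qle => h'; apply: le_trans h' _; rewrite le_max lexx //.
Qed.

Definition ltM (f g : M) : Prop := f <> g /\ mf f (dM f g) < mf g (dM f g).

Lemma ltM_at f g s : dM f g = s -> f <> g -> (ltM f g <-> mf f s < mf g s).
Proof. move=> <- ne; rewrite /ltM; split; [case|]; auto. Qed.

Lemma ltM_lin : strict_linear ltM.
Proof.
split; first by move=> x [].
split.
  move=> f g h [ne1 lt1] [ne2 lt2].
  set a := dM f g in lt1; set b := dM g h in lt2.
  have ab1 := dM_above (f:=f) (g:=g); have ab2 := dM_above (f:=g) (g:=h).
  case: (qlt_total a b) => [lab|[eab|lab]].
  - have e : mf f b = mf g b by apply: ab1.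
    have dfh : dM f h = b.
      apply: dM_char; first by rewrite e => q; move: lt2; rewrite q ltxx.
      move=> t lt; rewrite ab1 ?ab2 //; apply: qlt_trans lab lt.
    have ne : f <> h by move=> q; move: lt2; rewrite -e q ltxx.
    by rewrite (ltM_at dfh ne) e.
  - rewrite -eab in lt2 ab2.
    have dfh : dM f h = a.
      apply: dM_char; first by move=> q; move: (lt_trans lt1 lt2); rewrite q ltxx.
      move=> t lt; rewrite ab1 // ab2 //; rewrite eab in lt; exact: lt.
    have ne : f <> h by move=> q; move: (lt_trans lt1 lt2); rewrite q ltxx.
    by rewrite (ltM_at dfh ne); apply: lt_trans lt1 lt2.
  - have e : mf g a = mf h a by apply: ab2.
    have dfh : dM f h = a.
      apply: dM_char; first by rewrite -e => q; move: lt1; rewrite q ltxx.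
      move=> t lt; rewrite ab1 ?ab2 //; apply: qlt_trans lab lt.
    have ne : f <> h by move=> q; move: lt1; rewrite e q ltxx.
    by rewrite (ltM_at dfh ne) -e.
move=> f g; case: (classic (f = g)) => [e|ne]; first by auto.
have := dM_neq ne; case: (ltgtP (mf f (dM f g)) (mf g (dM f g))) => h // _.
  by left.
by right; right; split; [move=> e; apply: ne|rewrite dM_sym].
Qed.

Lemma ltM_conv : convex_order ltM dM.
Proof.
move=> x r a b c [neab ltab] [nebc ltbc] hxa hxc.
apply: NNPP; rewrite qle_nlt => /NNPP lt.
set s := dM x b in lt.
have nexb : x <> b by move=> e; move: lt; rewrite /s e dM_self => /nqlt0.
have hxs := dM_neq nexb; fold s in hxs.
have ax : forall t, qle s t -> mf a t = mf x t.
  move=> t st; rewrite dM_sym in hxa; move: hxa => /dM_le -> //; exact: qlt_le_trans lt st.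
have cx : forall t, qle s t -> mf c t = mf x t.
  move=> t st; rewrite dM_sym in hxc; move: hxc => /dM_le -> //; exact: qlt_le_trans lt st.
have dab : dM a b = s.
  apply: dM_char; first by rewrite ax //; apply: qle_refl.
  move=> t st; rewrite ax; last exact: qlt_le.
  by apply: dM_above.
have dbc : dM b c = s.
  apply: dM_char; first by rewrite cx; [move=> e; apply: hxs; rewrite e|apply: qle_refl].
  move=> t st; rewrite cx; last exact: qlt_le.
  by apply/esym; apply: dM_above.
move: ltab ltbc; rewrite dab dbc ax ?cx; try apply: qle_refl.
move=> h1 h2; move: (lt_trans h1 h2); rewrite ltxx //.
Qed.

Definition msetf (m0 : M) (r : qnn) (v : rat) (t : qnn) : rat :=
  if qv r < qv t then mf m0 t else if (qv t == qv r) && (0 < qv t) then v else 0.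

Lemma msetf0 m0 r v : msetf m0 r v q0 = 0.
Proof. by rewrite /msetf qv0 ltNge qv_ge0 /= ltxx andbF. Qed.

Lemma msetf_fin m0 r v : exists s : seq rat, forall t, msetf m0 r v t <> 0 -> List.In (qv t) s.
Proof.
case: (mfin m0) => s Hs; exists (qv r :: s) => t; rewrite /msetf.
case: ifP => _; first by move=> h; right; apply: Hs.
case: ifP => [/andP [/eqP -> _] _|_ //]; by left.
Qed.

Definition mset m0 r v : M := mkM (msetf0 m0 r v) (msetf_fin m0 r v).

Lemma mset_above m0 r v t : qlt r t -> mf (mset m0 r v) t = mf m0 t.
Proof. by rewrite /= /msetf /qlt => ->. Qed.
Lemma mset_at m0 r v : qlt q0 r -> mf (mset m0 r v) r = v.
Proof. by rewrite /= /msetf /qlt qv0 ltxx eqxx => ->. Qed.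

Lemma zero_fin : exists s : seq rat, forall t : qnn, (0:rat) <> 0 -> List.In (qv t) s.
Proof. by exists [::]. Qed.
Definition zeroM : M := @mkM (fun _ => 0) erefl zero_fin.

Lemma list_min (T : Type) (h : T -> qnn) (l : seq T) : l <> [::] ->
  exists a, List.In a l /\ forall b, List.In b l -> qle (h a) (h b).
Proof.
elim: l => [//|c l IH] _; case: (classic (l = [::])) => [->|ne].
  by exists c; split; [left|move=> b [<-|[]]; apply: qle_refl].
have [a [Ha Hm]] := IH ne.
case: (qlt_total (h a) (h c)) => [lt|[eq|lt]].
- exists a; split; [by right|move=> b [<-|Hb]]; [exact: qlt_le|exact: Hm].
- exists a; split; [by right|move=> b [<-|Hb]]; [rewrite eq; apply: qle_refl|exact: Hm].
- exists c; split; [by left|move=> b [<-|Hb]]; [apply: qle_refl|].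
  apply: qle_trans (qlt_le lt) (Hm _ Hb).
Qed.

Lemma rmax_ex (l : seq rat) : forall (A : rat -> Prop),
  (forall p, A p -> List.In p l) -> (exists p, A p) ->
  exists a, A a /\ forall p, A p -> p <= a.
Proof.
elim: l => [|c l IH] A Hl [p0 Ap0]; first by case: (Hl _ Ap0).
case: (classic (exists p, A p /\ p <> c)) => [Ex|NEx].
  have Hl' : forall p, A p /\ p <> c -> List.In p l.
    by move=> p [Ap ne]; case: (Hl _ Ap) => // e; case: ne.
  have [a [[Aa _] Ha]] := IH _ Hl' Ex.
  case: (classic (A c)) => Ac.
    case: (lerP a c) => h.
      exists c; split => // p Ap; case: (classic (p = c)) => [->//|ne].
      by apply: le_trans (Ha _ (conj Ap ne)) h.
    exists a; split => // p Ap; case: (classic (p = c)) => [->|ne]; first exact: ltW.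
    exact: Ha.
  exists a; split => // p Ap; apply: Ha; split => // e; by subst.
exists c; have e : forall p, A p -> p = c.
  by move=> p Ap; apply: NNPP => ne; apply: NEx; exists p.
have Ac : A c by rewrite -(e _ Ap0).
split => // p Ap; by rewrite (e _ Ap).
Qed.

Lemma rmin_ex (l : seq rat) (A : rat -> Prop) :
  (forall p, A p -> List.In p l) -> (exists p, A p) ->
  exists a, A a /\ forall p, A p -> a <= p.
Proof.
move=> Hl [p Ap].
have Hl' : forall q, A (- q) -> List.In q (map (fun x => - x) l).
  move=> q Aq; have := List.in_map (fun x => - x) _ _ (Hl _ Aq); by rewrite opprK.
have Ap' : A (- - p) by rewrite opprK.
have [a [Aa Ha]] := rmax_ex Hl' (ex_intro _ (- p) Ap').
exists (- a); split => // q Aq; have := Ha (- q); rewrite opprK => h.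
have := h Aq; rewrite lerNl //.
Qed.

Lemma gap_ex (l : seq rat) (A B : rat -> Prop) :
  (forall p, A p -> List.In p l) -> (forall p, B p -> List.In p l) ->
  (forall p q, A p -> B q -> p < q) ->
  exists v, (forall p, A p -> p < v) /\ (forall q, B q -> v < q).
Proof.
move=> HA HB Hs.
case: (classic (exists p, A p)) => EA; case: (classic (exists q, B q)) => EB.
- have [a [Aa Ha]] := rmax_ex HA EA; have [b [Bb Hb]] := rmin_ex HB EB.
  have ab := Hs _ _ Aa Bb.
  exists ((a + b) / 2); split.
    move=> p Ap; have := Ha _ Ap => h; lra.
  move=> q Bq; have := Hb _ Bq => h; lra.
- have [a [Aa Ha]] := rmax_ex HA EA; exists (a + 1); split.
    move=> p Ap; have := Ha _ Ap => h; lra.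
  by move=> q Bq; case: EB; exists q.
- have [b [Bb Hb]] := rmin_ex HB EB; exists (b - 1); split.
    by move=> p Ap; case: EA; exists p.
  move=> q Bq; have := Hb _ Bq => h; lra.
- exists 0; split; [move=> p Ap; case: EA; by exists p|move=> q Bq; case: EB; by exists q].
Qed.

Lemma ultra_iso (X : Type) (d : X -> X -> qnn) : ultrametric d ->
  forall a b c, qlt (d a b) (d b c) -> d a c = d b c.
Proof.
move=> U a b c lt; have [_ [Us _]] := U.
have le : qle (d a c) (d b c).
  by apply: (X_ultra_le U (y := b)); [exact: qlt_le|exact: qle_refl].
case/qle_lt: le => // lt2; exfalso.
have key : forall r, qle (d a b) r -> qle (d a c) r -> qle (d b c) r.
  by move=> r h1 h2; apply: (X_ultra_le U (y := a)) => //; rewrite Us.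
case: (qlt_total (d a b) (d a c)) => [h|[h|h]].
- have := key _ (qlt_le h) (qle_refl _); rewrite qle_nlt => H; by apply: H.
- have h' : qle (d a b) (d a c) by rewrite h; apply: qle_refl.
  have := key _ h' (qle_refl _); rewrite qle_nlt => H; by apply: H.
- have := key _ (qle_refl _) (qlt_le h); rewrite qle_nlt => H; by apply: H.
Qed.

Section BF.
Variables (X : Type) (ltX : X -> X -> Prop) (dX : X -> X -> qnn).
Hypotheses (HlinX : strict_linear ltX) (HumX : ultrametric dX) (HcvX : convex_order ltX dX).

Lemma ltX_irr x : ~ ltX x x. Proof. by case: HlinX. Qed.
Lemma ltX_trans x y z : ltX x y -> ltX y z -> ltX x z. Proof. case: HlinX => _ [H _]; exact: H. Qed.
Lemma ltX_total x y : ltX x y \/ x = y \/ ltX y x. Proof. case: HlinX => _ [_ H]; exact: H. Qed.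
Lemma dX_sym x y : dX x y = dX y x. Proof. by case: HumX => _ []. Qed.
Lemma dX_self x : dX x x = q0. Proof. exact: ultra_self. Qed.
Lemma dX_0 x y : dX x y = q0 -> x = y. Proof. exact: ultra_0. Qed.

Definition pp (p q : X * M) : Prop :=
  (p.1 = q.1 <-> p.2 = q.2) /\ dX p.1 q.1 = dM p.2 q.2 /\ (ltX p.1 q.1 <-> ltM p.2 q.2).
Definition piso (L : seq (X * M)) : Prop :=
  forall p q, List.In p L -> List.In q L -> pp p q.

Lemma pp_refl p : pp p p.
Proof.
split; first by [].
split; first by rewrite dX_self dM_self.
by split => h; [case: (ltX_irr h)|case: h].
Qed.

Lemma ltM_irr m : ~ ltM m m. Proof. by case. Qed.
Lemma ltM_trans a b c : ltM a b -> ltM b c -> ltM a c.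
Proof. case: ltM_lin => _ [H _]; exact: H. Qed.
Lemma ltM_total a b : ltM a b \/ a = b \/ ltM b a.
Proof. case: ltM_lin => _ [_ H]; exact: H. Qed.

Lemma pp_sym p q : pp p q -> pp q p.
Proof.
case: p q => [x m] [x' m'] [/= E [D O]]; split => /=.
  by split => e; apply/esym; apply E.
split; first by rewrite dX_sym dM_sym.
split => h.
  case: (ltM_total m' m) => [//|[e|l]].
    by move/E: (esym e) => ex; subst; case: (ltX_irr h).
  by move/O: l => l; case: (ltX_irr (ltX_trans h l)).
case: (ltX_total x' x) => [//|[e|l]].
  by move/E: (esym e) => ex; subst; case: (ltM_irr h).
by move/O: l => l; case: (ltM_irr (ltM_trans h l)).
Qed.

Lemma piso_cons p L : piso L -> (forall q, List.In q L -> pp p q) -> piso (p :: L).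
Proof.
move=> HL Hp a b [<-|Ha] [<-|Hb]; first exact: pp_refl.
- exact: Hp.
- apply: pp_sym; exact: Hp.
- exact: HL.
Qed.

Lemma forth L x : piso L -> exists m, piso ((x, m) :: L).
Proof.
move=> HL.
case: (classic (exists m, List.In (x, m) L)) => [[m Hm]|Hnot].
  exists m; apply: piso_cons => // q Hq; exact: HL.
case: (classic (L = [::])) => [->|Lne].
  by exists zeroM; apply: piso_cons; [move=> ? ? []|move=> ? []].
have [[x0 m0] [H0 Hmin]] := list_min (fun p => dX x p.1) Lne.
set r := dX x x0; simpl in Hmin.
have xx0 : x <> x0 by move=> e; apply: Hnot; exists m0; rewrite e.
have rpos : qlt q0 r by apply: qpos => e; apply: xx0; apply: dX_0.
pose Lo v := exists x' m', List.In (x', m') L /\ qle (dX x0 x') r /\ ltX x' x /\ v = mf m' r.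
pose Hi v := exists x' m', List.In (x', m') L /\ qle (dX x0 x') r /\ ltX x x' /\ v = mf m' r.
have sep : forall p q, Lo p -> Hi q -> p < q.
  move=> p q [x1 [m1 [H1 [B1 [L1 ->]]]]] [x2 [m2 [H2 [B2 [L2 ->]]]]].
  have lt12 : ltX x1 x2 := ltX_trans L1 L2.
  have [E12 [d12 o12]] := HL _ _ H1 H2; simpl in E12, d12, o12.
  have le12 : qle (dX x1 x2) r.
    by apply: (X_ultra_le HumX (y := x0)) => //; rewrite dX_sym.
  case/qle_lt: le12 => [lt|eq].
    exfalso.
    have h11 : qle (dX x1 x1) (dX x1 x2) by rewrite dX_self; apply: qle0.
    have c := HcvX L1 L2 h11 (qle_refl _).
    have m1' := Hmin _ H1; simpl in m1'; rewrite [dX x x1]dX_sym in m1'.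
    have := qle_lt_trans (qle_trans m1' c) lt; exact: qlt_irr.
  have ne12 : m1 <> m2 by move/E12 => e; subst; case: (ltX_irr lt12).
  rewrite d12 in eq; rewrite -(ltM_at eq ne12); exact/o12.
have inl : forall p, Lo p \/ Hi p -> List.In p (map (fun p => mf p.2 r) L).
  move=> p [[x' [m' [H' [_ [_ ->]]]]]|[x' [m' [H' [_ [_ ->]]]]]];
    exact: (List.in_map (fun p => mf p.2 r) _ _ H').
have [v [Hv1 Hv2]] := gap_ex (fun p h => inl p (or_introl h)) (fun p h => inl p (or_intror h)) sep.
exists (mset m0 r v); set m := mset m0 r v.
apply: piso_cons => // [[x' m']] Hq.
have nxx' : x <> x' by move=> e; apply: Hnot; exists m'; rewrite e.
have [E0 [d0 o0]] := HL _ _ H0 Hq; simpl in E0, d0, o0.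
suff [D O] : dX x x' = dM m m' /\ (ltX x x' <-> ltM m m').
  split => //=; split => // e; exfalso; apply: nxx'; apply: dX_0.
  by rewrite D e dM_self.
case: (classic (qle (dX x0 x') r)) => Bx'.
- have dxx' : dX x x' = r.
    apply: qle_antisym; last exact: (Hmin _ Hq).
    by apply: (X_ultra_le HumX (y := x0)) => //; apply: qle_refl.
  have side : ltX x' x \/ ltX x x'.
    by case: (ltX_total x' x) => [|[e|]]; auto; case: nxx'.
  have vne : v <> mf m' r.
    move=> e; case: side => s.
      have := Hv1 (mf m' r) (ex_intro _ x' (ex_intro _ m' (conj Hq (conj Bx' (conj s erefl))))).
      by rewrite e ltxx.
    have := Hv2 (mf m' r) (ex_intro _ x' (ex_intro _ m' (conj Hq (conj Bx' (conj s erefl))))).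
    by rewrite e ltxx.
  have dmm : dM m m' = r.
    apply: dM_char; first by rewrite mset_at.
    move=> t lt; rewrite mset_above //; rewrite d0 in Bx'; move/dM_le: Bx'; exact.
  have nem : m <> m' by move=> e; move: rpos; rewrite -dmm e dM_self; exact: qlt_irr.
  split; first by rewrite dxx' dmm.
  rewrite (ltM_at dmm nem) mset_at //; split.
    move=> s; exact: (Hv2 _ (ex_intro _ x' (ex_intro _ m' (conj Hq (conj Bx' (conj s erefl)))))).
  move=> h; case: side => // s.
  have := Hv1 _ (ex_intro _ x' (ex_intro _ m' (conj Hq (conj Bx' (conj s erefl))))).
  by rewrite ltNge (ltW h).
- have rs : qlt r (dX x0 x') by move: Bx'; rewrite qle_nlt => /NNPP.
  set s := dX x0 x' in rs.
  have dxx' : dX x x' = s by apply: ultra_iso.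
  have x0x' : x0 <> x' by move=> e; move: rs; rewrite /s e dX_self; exact: nqlt0.
  have nem0 : m0 <> m' by move/E0.
  have dmm : dM m m' = s.
    apply: dM_char; first by rewrite mset_above // /s d0; apply: dM_neq.
    move=> t lt; rewrite mset_above; last exact: qlt_trans rs lt.
    by apply: dM_above; rewrite -d0.
  have nem : m <> m' by move=> e; move: (qlt_trans rpos rs); rewrite -dmm e dM_self; exact: qlt_irr.
  split; first by rewrite dxx' dmm.
  rewrite (ltM_at dmm nem) mset_above // -(ltM_at (esym d0) nem0) -o0.
  have bx : qle (dX x0 x) r by rewrite dX_sym; apply: qle_refl.
  have bx0 : qle (dX x0 x0) r by rewrite dX_self; apply: qle0.
  split => h.
    case: (ltX_total x0 x') => [//|[e|l]]; first by case: x0x'.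
    by have := HcvX h l bx bx0; rewrite qle_nlt.
  case: (ltX_total x x') => [//|[e|l]]; first by case: nxx'.
  by have := HcvX h l bx0 bx; rewrite qle_nlt.
Qed.

End BF.

Lemma dedup_ex (T : Type) (l : seq T) :
  exists l', List.NoDup l' /\ forall a, List.In a l <-> List.In a l'.
Proof.
elim: l => [|c l [l' [N H]]]; first by exists [::]; split => //; constructor.
case: (classic (List.In c l')) => Hc.
  exists l'; split => // a; split => [[<-|h]|h] //; [by apply/H|by right; apply/H].
exists (c :: l'); split; first by constructor.
move=> a; split => [[<-|h]|[<-|h]]; [by left|by right; apply/H|by left|by right; apply/H].
Qed.

Lemma size_length (T : Type) (l : seq T) : size l = List.length l.
Proof. by elim: l => //= c l ->. Qed.

Section Back.
Variables (X : Type) (ltX : X -> X -> Prop) (dX : X -> X -> qnn).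
Hypotheses (HlinX : strict_linear ltX) (HumX : ultrametric dX) (HcvX : convex_order ltX dX)
  (HextX : extension_property ltX dX).

Section Bspace.
Variable (P : seq M).
Hypothesis (NP : List.NoDup P).
Definition nthP (i : 'I_(size P)) : M := List.nth (val i) P zeroM.
Definition allD : seq qnn := List.flat_map (fun a => List.map (fun b => dM a b) P) P.
Definition BP : fin_space := @FinSpace (ordinal (size P) : finType)
  (fun i j => ltM (nthP i) (nthP j)) (fun i j => dM (nthP i) (nthP j)) (q0 :: allD).

Lemma nthP_inj i j : nthP i = nthP j -> i = j.
Proof.
move=> e; apply: val_inj; have H := proj1 (List.NoDup_nth P zeroM) NP.
have li : (val i < List.length P)%coq_nat by rewrite -size_length; apply/ssrnat.ltP; exact: ltn_ord.
have lj : (val j < List.length P)%coq_nat by rewrite -size_length; apply/ssrnat.ltP; exact: ltn_ord.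
exact: (H _ _ li lj e).
Qed.

Lemma nthP_in i : List.In (nthP i) P.
Proof. apply: List.nth_In; rewrite -size_length; apply/ssrnat.ltP; exact: ltn_ord. Qed.

Lemma in_allD a b : List.In a P -> List.In b P -> List.In (dM a b) allD.
Proof.
move=> Ha Hb; apply/List.in_flat_map; exists a; split => //.
exact: List.in_map.
Qed.

Lemma nthP_ex a : List.In a P -> exists i, nthP i = a.
Proof.
move=> /(List.In_nth _ _ zeroM) [n [lt e]].
have lt' : (n < size P)%N by rewrite size_length; apply/ssrnat.ltP.
by exists (Ordinal lt').
Qed.

Lemma BP_cous : is_fin_cous BP.
Proof.
split.
  split; first by move=> x /= [].
  split; first by move=> x y z /=; apply: ltM_trans.
  move=> x y /=; case: (ltM_total (nthP x) (nthP y)) => [|[e|]]; auto.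
  by right; left; apply: nthP_inj.
split.
  split; first by move=> x y /=; split => [e|->]; [apply: nthP_inj; apply: dM_0; apply: qv_inj|rewrite dM_self].
  split; first by move=> x y /=; apply: dM_sym.
  by move=> x y z /=; case: dM_ultrametric => _ [_ H]; apply: H.
split; first by move=> x r a b c /=; apply: ltM_conv.
split; first by left.
by move=> x y /=; right; apply: in_allD; apply: nthP_in.
Qed.
End Bspace.

Lemma back L m : piso ltX dX L -> exists x, piso ltX dX ((x, m) :: L).
Proof.
move=> HL.
case: (classic (exists x, List.In (x, m) L)) => [[x Hx]|Hnot].
  exists x; apply: piso_cons => // q Hq; exact: HL.
have [P0 [N0 H0]] := dedup_ex (map snd L).
have inP0 : forall x m', List.In (x, m') L -> List.In m' P0.
  by move=> x m' h; apply/H0; exact: (List.in_map snd _ _ h).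
have mP0 : ~ List.In m P0.
  move/H0 => /List.in_map_iff [[x' m'] [/= e h]]; apply: Hnot; exists x'; by rewrite -e.
set P := m :: P0.
have NP : List.NoDup P by constructor.
pose i0 : 'I_(size P) := ord0.
pose eP (x : X) : 'I_(size P) := epsilon (inhabits i0)
   (fun i => exists m', List.In (x, m') L /\ nthP i = m').
have eP_spec : forall x m', List.In (x, m') L -> nthP (eP x) = m'.
  move=> x m' h.
  have ex : exists i : 'I_(size P), exists m'', List.In (x, m'') L /\ nthP i = m''.
    have [i hi] := nthP_ex (P := P) (a := m') (or_intror (inP0 _ _ h)).
    by exists i; exists m'.
  have [m'' [h'' e'']] := epsilon_spec (inhabits i0) _ ex.
  rewrite -/(eP x) in e''; rewrite e''.
  by have [E _] := HL _ _ h h''; apply/esym; apply/E.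
pose A := map fst L.
have inA : forall a, List.In a A -> exists ma, List.In (a, ma) L.
  by move=> a /List.in_map_iff [[a' ma] [/= <- h]]; exists ma.
have c2 : forall a a', List.In a A -> List.In a' A -> List.In (dX a a') (fdist (BP P)).
  move=> a a' /inA [ma Ha] /inA [ma' Ha']; right.
  have [_ [D _]] := HL _ _ Ha Ha'; rewrite /= in D; rewrite D.
  by apply: in_allD; right; [apply: (inP0 _ _ Ha)|apply: (inP0 _ _ Ha')].
have c3 : forall a a', List.In a A -> List.In a' A -> eP a = eP a' -> a = a'.
  move=> a a' /inA [ma Ha] /inA [ma' Ha'] e.
  have [E _] := HL _ _ Ha Ha'; apply/E => /=.
  by rewrite -(eP_spec _ _ Ha) -(eP_spec _ _ Ha') e.
have c4 : forall a a', List.In a A -> List.In a' A -> ltX a a' -> @flt (BP P) (eP a) (eP a').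
  move=> a a' /inA [ma Ha] /inA [ma' Ha'] l /=.
  have [_ [_ O]] := HL _ _ Ha Ha'; rewrite (eP_spec _ _ Ha) (eP_spec _ _ Ha').
  exact/O.
have c5 : forall r s, List.In r (fdist (BP P)) -> List.In s (fdist (BP P)) -> qlt r s -> qlt (id r) (id s) by [].
have c6 : forall r, List.In r (fdist (BP P)) -> List.In (id r) (fdist (BP P)) by [].
have c7 : forall a a', List.In a A -> List.In a' A -> @fd (BP P) (eP a) (eP a') = id (dX a a').
  move=> a a' /inA [ma Ha] /inA [ma' Ha'] /=.
  have [_ [D _]] := HL _ _ Ha Ha'; rewrite /= in D.
  by rewrite (eP_spec _ _ Ha) (eP_spec _ _ Ha') D.
have [gP [gD [ginj [gord [_ [_ [gd [gP_eP gD_eD]]]]]]]] :=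
  @HextX A (fdist (BP P)) (or_introl erefl) c2 (BP P) (BP_cous NP) eP id c3 c4 c5 erefl c6 c7.
exists (gP i0); apply: piso_cons => // [[a ma]] Ha.
have ea : gP (eP a) = a by apply: gP_eP; exact: (List.in_map fst _ _ Ha).
have ema : nthP (eP a) = ma := eP_spec _ _ Ha.
have n0 : nthP i0 = m by [].
have mma : m <> ma by move=> e; apply: Hnot; exists a; rewrite e.
have D : dX (gP i0) a = dM m ma.
  rewrite -ea gd /= ema n0 gD_eD //; right; apply: in_allD.
    by left.
  by right; apply: (inP0 _ _ Ha).
have nxa : gP i0 <> a by move=> e; apply: mma; apply: dM_0; rewrite -D e dX_self.
split => /=; first by split.
split => //; split => h.
  case: (ltM_total m ma) => [//|[e|l]]; first by case: mma.
  have : ltX a (gP i0) by rewrite -ea; apply: gord => /=; rewrite ema n0.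
  by move=> l'; case: (ltX_irr HlinX (ltX_trans HlinX h l')).
by rewrite -ea; apply: gord => /=; rewrite ema n0.
Qed.

End Back.

Definition valof (l : seq (rat * rat)) (q : rat) : rat :=
  foldr (fun p acc => if p.1 == q then p.2 else acc) 0 l.

Lemma valof_fin l q : valof l q <> 0 -> List.In q (map fst l).
Proof.
elim: l => [//|[a b] l IH] /=; case: eqP => [->|_]; first by left.
by move=> h; right; apply: IH.
Qed.

Lemma valof_map (h : rat -> rat) s q :
  (List.In q s -> valof (map (fun u => (u, h u)) s) q = h q) /\
  (~ List.In q s -> valof (map (fun u => (u, h u)) s) q = 0).
Proof.
elim: s => [|c s [IH1 IH2]] /=; first by split.
case: eqP => [->|ne]; first by split => // h'; case: h'; left.
split; first by case=> [e|h']; [case: ne|apply: IH1].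
by move=> h'; apply: IH2 => h''; apply: h'; right.
Qed.

Definition mofl_f (l : seq (rat * rat)) (t : qnn) : rat :=
  if qv t == 0 then 0 else valof l (qv t).
Lemma mofl_0 l : mofl_f l q0 = 0. Proof. by rewrite /mofl_f qv0 eqxx. Qed.
Lemma mofl_fin l : exists s : seq rat, forall t, mofl_f l t <> 0 -> List.In (qv t) s.
Proof.
exists (map fst l) => t; rewrite /mofl_f; case: ifP => // _; exact: valof_fin.
Qed.
Definition mofl l : M := mkM (mofl_0 l) (mofl_fin l).

Definition eM (n : nat) : M :=
  match unpickle n with Some l => mofl l | None => zeroM end.

Lemma eM_surj a : exists n, eM n = a.
Proof.
case: (mfin a) => s Hs.
exists (pickle [seq (u, mf a (toq u)) | u <- s]); rewrite /eM pickleK.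
apply: M_ext => t /=; rewrite /mofl_f; case: eqP => [e|ne].
  by rewrite (qv_inj (e : qv t = qv q0)) mf0.
have [h1 h2] := valof_map (fun u => mf a (toq u)) s (qv t).
case: (classic (List.In (qv t) s)) => Hin.
  by rewrite h1 // toqK.
rewrite h2 //; apply/esym; apply: NNPP => h; apply: Hin; exact: Hs.
Qed.

Lemma piso_nil (X : Type) (ltX : X -> X -> Prop) dX : piso ltX dX [::].
Proof. by move=> p q []. Qed.

Section Iso.
Variables (X : Type) (ltX : X -> X -> Prop) (dX : X -> X -> qnn).
Hypotheses (HlinX : strict_linear ltX) (HumX : ultrametric dX) (HcvX : convex_order ltX dX)
  (HextX : extension_property ltX dX).
Variables (c : X -> nat) (Hc : injective c).

Definition unitB : fin_space := @FinSpace unit (fun _ _ => False) (fun _ _ => q0) [:: q0].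
Lemma unitB_cous : is_fin_cous unitB.
Proof.
split.
  split; first by move=> x /=.
  split; first by move=> x y z /=.
  by move=> [] [] /=; right; left.
split.
  split; first by move=> [] [] /=.
  split; first by move=> [] [] /=.
  by move=> x y z /=; apply: lexx.
split; first by move=> ? ? ? ? ? /=.
by split; [left|move=> * /=; left].
Qed.

Lemma X_inh : exists x : X, True.
Proof.
have [gP _] := @HextX [::] [:: q0] (or_introl erefl)
  (fun a a' (h : List.In a [::]) _ => False_ind _ h) unitB unitB_cous
  (fun _ => tt) id (fun a a' (h : List.In a [::]) _ _ => False_ind _ h)
  (fun a a' (h : List.In a [::]) _ _ => False_ind _ h) (fun _ _ _ _ h => h) erefl
  (fun r h => h) (fun a a' (h : List.In a [::]) _ => False_ind _ h).
by exists (gP tt).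
Qed.

Definition inhX : inhabited X := exists_inhabited _ X_inh.
Definition eX (n : nat) : X := epsilon inhX (fun x => c x = n).
Lemma eX_c x : eX (c x) = x.
Proof. apply: Hc; rewrite /eX; apply: (epsilon_spec inhX (fun y => c y = c x)); by exists x. Qed.

Definition PL := {L : seq (X * M) | piso ltX dX L}.
Definition forthS (L : PL) (x : X) : PL :=
  let (m, Hm) := constructive_indefinite_description _ (forth HlinX HumX HcvX x (proj2_sig L)) in
  exist _ ((x, m) :: proj1_sig L) Hm.
Definition backS (L : PL) (m : M) : PL :=
  let (x, Hx) := constructive_indefinite_description _ (back HlinX HumX HextX m (proj2_sig L)) in
  exist _ ((x, m) :: proj1_sig L) Hx.

Lemma forthS_spec L x : exists m, proj1_sig (forthS L x) = (x, m) :: proj1_sig L.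
Proof. rewrite /forthS; case: constructive_indefinite_description => m Hm /=; by exists m. Qed.
Lemma backS_spec L m : exists x, proj1_sig (backS L m) = (x, m) :: proj1_sig L.
Proof. rewrite /backS; case: constructive_indefinite_description => x Hx /=; by exists x. Qed.

Fixpoint seqL (n : nat) : PL :=
  match n with
  | 0 => exist _ [::] (piso_nil ltX dX)
  | S k => backS (forthS (seqL k) (eX k)) (eM k)
  end.

Lemma seqL_step n p : List.In p (proj1_sig (seqL n)) -> List.In p (proj1_sig (seqL n.+1)).
Proof.
move=> h /=; have [x ->] := backS_spec (forthS (seqL n) (eX n)) (eM n).
have [m ->] := forthS_spec (seqL n) (eX n); by right; right.
Qed.

Lemma seqL_mono k n p : (k <= n)%N -> List.In p (proj1_sig (seqL k)) -> List.In p (proj1_sig (seqL n)).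
Proof.
elim: n => [|n IH]; first by rewrite leqn0 => /eqP ->.
rewrite leq_eqVlt => /orP [/eqP -> //|]; rewrite ltnS => h hp.
apply: seqL_step; exact: IH.
Qed.

Definition Rel (x : X) (m : M) : Prop := exists n, List.In (x, m) (proj1_sig (seqL n)).

Lemma Rel_pp x m x' m' : Rel x m -> Rel x' m' -> pp ltX dX (x, m) (x', m').
Proof.
move=> [n1 h1] [n2 h2]; apply: (proj2_sig (seqL (maxn n1 n2))).
  by apply: seqL_mono h1; apply: leq_maxl.
by apply: seqL_mono h2; apply: leq_maxr.
Qed.

Lemma Rel_tot x : exists m, Rel x m.
Proof.
have [y e] := backS_spec (forthS (seqL (c x)) (eX (c x))) (eM (c x)).
have [m e'] := forthS_spec (seqL (c x)) (eX (c x)).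
exists m; exists (c x).+1 => /=; rewrite e e' eX_c; by right; left.
Qed.

Lemma Rel_surj m : exists x, Rel x m.
Proof.
have [n <-] := eM_surj m.
have [y e] := backS_spec (forthS (seqL n) (eX n)) (eM n).
by exists y; exists n.+1 => /=; rewrite e; left.
Qed.

Definition FX (x : X) : M := epsilon (inhabits zeroM) (Rel x).
Definition GX (m : M) : X := epsilon inhX (fun x => Rel x m).
Lemma Rel_F x : Rel x (FX x). Proof. exact: (epsilon_spec _ _ (Rel_tot x)). Qed.
Lemma Rel_G m : Rel (GX m) m. Proof. exact: (epsilon_spec _ (fun x => Rel x m) (Rel_surj m)). Qed.
Lemma GF x : GX (FX x) = x.
Proof. have [E _] := Rel_pp (Rel_G (FX x)) (Rel_F x); by apply/E. Qed.
Lemma FG m : FX (GX m) = m.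
Proof. have [E _] := Rel_pp (Rel_F (GX m)) (Rel_G m); by apply/E. Qed.
Lemma F_d x y : dM (FX x) (FX y) = dX x y.
Proof. by have [_ [D _]] := Rel_pp (Rel_F x) (Rel_F y). Qed.
Lemma F_lt x y : ltM (FX x) (FX y) <-> ltX x y.
Proof. have [_ [_ O]] := Rel_pp (Rel_F x) (Rel_F y); by split => /O. Qed.
Lemma G_d a b : dX (GX a) (GX b) = dM a b.
Proof. by rewrite -F_d !FG. Qed.
Lemma G_lt a b : ltX (GX a) (GX b) <-> ltM a b.
Proof. by rewrite -F_lt !FG. Qed.

End Iso.

Notation dfinv := Defs.finv.

Lemma finv_r (A : Type) (f : A -> A) y : bijective f -> f (dfinv f y) = y.
Proof.
case=> g fg gf; rewrite /dfinv; apply: (epsilon_spec (inhabits y) (fun x => f x = y)).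
by exists (g y).
Qed.
Lemma finv_l (A : Type) (f : A -> A) x : bijective f -> dfinv f (f x) = x.
Proof. move=> b; apply: (bij_inj b); exact: finv_r. Qed.
Lemma finv_bij (A : Type) (f : A -> A) : bijective f -> bijective (dfinv f).
Proof. move=> b; exists f => x; [exact: finv_r|exact: finv_l]. Qed.

Lemma autQ_q0 phi : is_autQ phi -> phi q0 = q0.
Proof.
case=> b O; have e := finv_r q0 b; set r := dfinv phi q0 in e.
case: (classic (r = q0)) => [E|ne]; first by rewrite E in e.
have := qpos ne; rewrite -O e => h; by case: (nqlt0 h).
Qed.

Lemma autQ_finv phi : is_autQ phi -> is_autQ (dfinv phi).
Proof.
case=> b O; split; first exact: finv_bij.
by move=> r s; rewrite -O !finv_r.
Qed.

Lemma autQ_comp phi psi : is_autQ phi -> is_autQ psi -> is_autQ (phi \o psi).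
Proof.
case=> b1 O1 [b2 O2]; split; first exact: bij_comp.
by move=> r s /=; rewrite O1 O2.
Qed.

Lemma autQ_id : is_autQ id.
Proof. by split; [exists id|]. Qed.

Definition suppM (f : M) : seq qnn :=
  map toq (proj1_sig (constructive_indefinite_description _ (mfin f))).
Lemma suppM_spec f t : mf f t <> 0 -> List.In t (suppM f).
Proof.
rewrite /suppM; case: constructive_indefinite_description => s Hs /= h.
rewrite -(toqK t); apply: List.in_map; exact: Hs.
Qed.

Section Sig.
Variables (phi : qnn -> qnn) (H : is_autQ phi).
Lemma sig0 f : mf f (dfinv phi q0) = 0.
Proof. by rewrite (autQ_q0 (autQ_finv H)) mf0. Qed.
Lemma sigfin f : exists s : seq rat, forall t, mf f (dfinv phi t) <> 0 -> List.In (qv t) s.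
Proof.
case: (mfin f) => s Hs; exists (map (fun u => qv (phi (toq u))) s) => t h.
have := List.in_map (fun u => qv (phi (toq u))) _ _ (Hs _ h).
by rewrite toqK finv_r //; case: H.
Qed.
End Sig.

Definition sig (phi : qnn -> qnn) (f : M) : M :=
  match excluded_middle_informative (is_autQ phi) with
  | left H => mkM (sig0 H f) (sigfin H f)
  | right _ => f end.

Lemma sig_mf phi f t : is_autQ phi -> mf (sig phi f) t = mf f (dfinv phi t).
Proof. rewrite /sig; by case: excluded_middle_informative. Qed.

Lemma sig_d phi f g : is_autQ phi -> dM (sig phi f) (sig phi g) = phi (dM f g).
Proof.
move=> H; have [b O] := H.
case: (classic (f = g)) => [->|ne]; first by rewrite !dM_self autQ_q0.
apply: dM_char; first by rewrite !sig_mf // finv_l //; apply: dM_neq.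
move=> t lt; rewrite !sig_mf //; apply: dM_above.
by rewrite -O finv_r.
Qed.

Lemma sig_lt phi f g : is_autQ phi -> (ltM (sig phi f) (sig phi g) <-> ltM f g).
Proof.
move=> H; have [b O] := H.
case: (classic (f = g)) => [->|ne]; first by split => /ltM_irr.
have ne' : sig phi f <> sig phi g.
  move=> e; apply: (dM_neq ne); have := f_equal (fun u => mf u (phi (dM f g))) e.
  by rewrite /= !sig_mf // finv_l.
rewrite (ltM_at (sig_d f g H) ne') (ltM_at erefl ne) !sig_mf // finv_l //.
Qed.

Lemma sig_comp phi psi f : is_autQ phi -> is_autQ psi ->
  sig phi (sig psi f) = sig (phi \o psi) f.
Proof.
move=> H1 H2; have H12 := autQ_comp H1 H2.
apply: M_ext => t; rewrite !sig_mf //; congr (mf f _).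
have [b _] := H12; apply: (bij_inj b).
by rewrite finv_r //= !finv_r //; [case: H1|case: H2].
Qed.

Lemma sig_supp phi psi f : is_autQ phi -> is_autQ psi ->
  (forall u, List.In u (suppM f) -> psi u = phi u) -> sig psi f = sig phi f.
Proof.
move=> [b1 O1] [b2 O2] Hag; apply: M_ext => t; rewrite !sig_mf //.
case: (classic (exists u, List.In u (suppM f) /\ phi u = t)) => [[u [Hu e]]|Nex].
  have e1 : dfinv phi t = u by rewrite -e finv_l.
  have e2 : dfinv psi t = u by rewrite -e -Hag // finv_l.
  by rewrite e1 e2.
have z1 : mf f (dfinv phi t) = 0.
  apply: NNPP => h; apply: Nex; exists (dfinv phi t); split; [exact: suppM_spec|exact: finv_r].
rewrite z1; apply: NNPP => h; apply: Nex; exists (dfinv psi t); split.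
  exact: suppM_spec.
by rewrite -Hag ?finv_r //; apply: suppM_spec.
Qed.

Lemma sig_id phi f : is_autQ phi -> (forall u, List.In u (suppM f) -> phi u = u) -> sig phi f = f.
Proof.
move=> H Hag; rewrite (sig_supp (phi := id) autQ_id H) //.
apply: M_ext => t; rewrite sig_mf; last exact: autQ_id.
congr (mf f _); have := finv_r t (proj1 autQ_id); done.
Qed.

Section Main.
Variables (X : Type) (ltX : X -> X -> Prop) (dX : X -> X -> qnn) (F : X -> M) (G : M -> X).
Hypotheses (GF : forall x, G (F x) = x) (FG : forall m, F (G m) = m)
  (Gd : forall a b, dX (G a) (G b) = dM a b) (Glt : forall a b, ltX (G a) (G b) <-> ltM a b).

Lemma Fd x y : dM (F x) (F y) = dX x y. Proof. by rewrite -Gd !GF. Qed.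
Lemma Flt x y : ltM (F x) (F y) <-> ltX x y. Proof. by rewrite -Glt !GF. Qed.

Definition sX (phi : qnn -> qnn) : aut_pair X := (fun x => G (sig phi (F x)), phi).

Lemma aut_comp g h : is_aut ltX dX g -> is_aut ltX dX h -> is_aut ltX dX (aut_mul g h).
Proof.
move=> [b1 [o1 [q1 [z1 d1]]]] [b2 [o2 [q2 [z2 d2]]]]; split; first exact: bij_comp.
split; first by move=> x y /=; rewrite o1 o2.
split; first exact: autQ_comp.
split; first by rewrite /= z2 z1.
by move=> x y /=; rewrite d1 d2.
Qed.

Lemma sX_aut phi : is_autQ phi -> is_aut ltX dX (sX phi).
Proof.
move=> H; have Hi := autQ_finv H; have [b O] := H.
split.
  exists (fun x => G (sig (dfinv phi) (F x))) => x /=; rewrite FG sig_comp // sig_id ?GF //;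
    try exact: autQ_comp.
  - by move=> u _ /=; rewrite finv_l.
  - by move=> u _ /=; rewrite finv_r.
split; first by move=> x y /=; rewrite Glt sig_lt // Flt.
split => //; split; first exact: autQ_q0.
by move=> x y /=; rewrite Gd sig_d // Fd.
Qed.

Lemma sX_hom phi psi : is_autQ phi -> is_autQ psi -> sX (phi \o psi) = aut_mul (sX phi) (sX psi).
Proof.
move=> H1 H2; rewrite /sX /aut_mul /=; f_equal.
by apply: functional_extensionality => x /=; rewrite FG sig_comp.
Qed.

Definition sl (s : seq (X + qnn)) : seq qnn :=
  List.flat_map (fun i => match i with inl x => suppM (F x) | inr r => [:: r] end) s.
Lemma sl_inl x s u : List.In (inl x) s -> List.In u (suppM (F x)) -> List.In u (sl s).
Proof. move=> h1 h2; apply/List.in_flat_map; by exists (inl x). Qed.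
Lemma sl_inr r s : List.In (inr r) s -> List.In r (sl s).
Proof. move=> h1; apply/List.in_flat_map; exists (inr r); split => //; by left. Qed.

Lemma sX_agree phi psi s : is_autQ phi -> is_autQ psi ->
  (forall u, List.In u (sl s) -> psi u = phi u) ->
  forall i, List.In i s -> ev_aut (sX psi) i = ev_aut (sX phi) i.
Proof.
move=> H1 H2 Hag [x|r] Hi /=.
  by rewrite (sig_supp (phi := phi)) // => u hu; apply: Hag; apply: sl_inl hu.
by rewrite Hag //; apply: sl_inr.
Qed.

Lemma part_emb : pw_embedding (is_iso ltX dX) (@ev_aut X) (is_aut ltX dX) (@ev_aut X) (@i_prec X).
Proof.
split.
  split; first by move=> g [].
  move=> U [US Uo]; split; first by move=> g [].
  move=> g [Ig Ug]; have [s Hs] := Uo _ Ug; exists s => h Ih Ag; split => //.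
  apply: Hs => //; by case: Ih.
split; first by move=> g g' _ _.
move=> U [US Uo].
pose V y := is_aut ltX dX y /\ exists g s, U g /\
   (forall h, is_iso ltX dX h -> (forall i, List.In i s -> ev_aut h i = ev_aut g i) -> U h) /\
   (forall i, List.In i s -> ev_aut y i = ev_aut g i).
exists V; split.
  split; first by move=> y [].
  move=> y [Ay [g [s [Ug [Hs Ag]]]]]; exists s => h Ah Agh; split => //.
  exists g, s; split => //; split => // i Hi; rewrite Agh // Ag //.
move=> y; split.
  move=> [g [Ug <-]]; have Ig := US _ Ug; split; last by exists g.
  split; first by case: Ig.
  have [s Hs] := Uo _ Ug; by exists g, s.
move=> [[Ay [g [s [Ug [Hs Ag]]]]] [g' [Ig' e]]]; exists y; split => //.
apply: Hs => //; by rewrite -e.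
Qed.

Lemma part_pi_cont : pw_continuous (is_aut ltX dX) (@ev_aut X) is_autQ ev_autQ (@pi_prec X).
Proof.
split; first by move=> g [_ [_ []]].
move=> U [US Uo]; split; first by move=> g [].
move=> g [Ag Ug]; have [s Hs] := Uo _ Ug; exists (map inr s) => h Ah Agh; split => //.
apply: Hs; first by case: Ah => _ [_ []].
move=> r Hr; have := Agh (inr r) (List.in_map _ _ _ Hr); by case.
Qed.

Lemma part_pi_open : pw_openmap (is_aut ltX dX) (@ev_aut X) is_autQ ev_autQ (@pi_prec X).
Proof.
move=> U [US Uo]; split.
  move=> y [g [Ug <-]]; by case: (US _ Ug) => _ [_ []].
move=> y [g [Ug <-]]; have [s Hs] := Uo _ Ug.
have Ag := US _ Ug; have [bg [og [qg [zg dg]]]] := Ag.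
exists (sl s) => psi Hpsi Agr.
pose theta := dfinv g.2 \o psi.
have Ht : is_autQ theta by apply: autQ_comp => //; apply: autQ_finv.
have [bq _] := qg.
exists (aut_mul g (sX theta)); split.
  apply: Hs; first by apply: aut_comp => //; apply: sX_aut.
  move=> [x|r] Hi /=.
    rewrite (sig_id Ht) ?GF // => u hu; rewrite /theta /=.
    have e : psi u = g.2 u := Agr u (sl_inl Hi hu).
    by rewrite e finv_l.
  have e : psi r = g.2 r := Agr r (sl_inr Hi).
  by rewrite /theta /= finv_r // e.
apply: functional_extensionality => t; by rewrite /pi_prec /= finv_r.
Qed.


Lemma part_s_cont : pw_continuous is_autQ ev_autQ (is_aut ltX dX) (@ev_aut X) sX.
Proof.
split; first exact: sX_aut.
move=> U [US Uo]; split; first by move=> phi [].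
move=> phi [Hphi Uphi]; have [s Hs] := Uo _ Uphi; exists (sl s) => psi Hpsi Ag; split => //.
apply: Hs; first exact: sX_aut.
apply: sX_agree => // u hu; exact: Ag.
Qed.

Lemma part_s_hom : hom_on is_autQ autQ_mul (@aut_mul X) sX.
Proof. move=> phi psi H1 H2; exact: sX_hom. Qed.

Lemma part_sd_cont : pw_continuous (prod_set (is_iso ltX dX) is_autQ) (ev_prod (@ev_aut X) ev_autQ)
   (is_aut ltX dX) (@ev_aut X) (sd_map sX).
Proof.
split; first by move=> [n h] [[An _] Hh]; apply: aut_comp => //; apply: sX_aut.
move=> U [US Uo]; split; first by move=> p [].
move=> [n h] [[[An n2] Hh] Up]; have [s Hs] := Uo _ Up.
pose l' : seq ((X + qnn) + qnn) := List.flat_map (fun i => match i with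
   | inl x => inl (inl ((sX h).1 x)) :: map inr (suppM (F x))
   | inr r => [:: inr r] end) s.
exists l' => [[n' h']] [[An' n2'] Hh'] Ag; split; first by split.
apply: Hs; first by apply: aut_comp => //; apply: sX_aut.
move=> [x|r] Hi /=.
  have e1 : sig h' (F x) = sig h (F x).
    apply: sig_supp => // u hu.
    have Hin : List.In (inr u) l'.
      by apply/List.in_flat_map; exists (inl x); split => //; right; apply: List.in_map.
    by have := Ag _ Hin; rewrite /= /ev_autQ; case.
  have Hin : List.In (inl (inl ((sX h).1 x))) l'.
    by apply/List.in_flat_map; exists (inl x); split => //; left.
  have := Ag _ Hin; rewrite /= e1; by case=> ->.
have Hin : List.In (inr r) l' by apply/List.in_flat_map; exists (inr r); split => //; left.
have := Ag _ Hin; rewrite /= /ev_autQ n2 n2'; by case=> ->.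
Qed.

Lemma sd_pre g : is_aut ltX dX g ->
  prod_set (is_iso ltX dX) is_autQ (aut_mul g (sX (dfinv g.2)), g.2) /\
 sd_map sX (aut_mul g (sX (dfinv g.2)), g.2) = g.
Proof.
move=> Ag; have [bg [og [qg [zg dg]]]] := Ag; have [b2 _] := qg.
have qi := autQ_finv qg.
split.
  split => //; split; first by apply: aut_comp => //; apply: sX_aut.
  by apply: functional_extensionality => t /=; rewrite finv_r.
case: g Ag bg og qg zg dg b2 qi => g1 g2 /= Ag bg og qg zg dg b2 qi.
rewrite /sd_map /aut_mul /sX /=; f_equal; apply: functional_extensionality => x /=.
  rewrite FG sig_comp // sig_id ?GF //; first exact: autQ_comp.
  by move=> u _ /=; rewrite finv_l.
by rewrite finv_l.
Qed.

Lemma part_sd_open : pw_openmap (prod_set (is_iso ltX dX) is_autQ) (ev_prod (@ev_aut X) ev_autQ)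
   (is_aut ltX dX) (@ev_aut X) (sd_map sX).
Proof.
move=> U [US Uo]; split.
  move=> y [[n h] [Up <-]]; have [[An _] Hh] := US _ Up; apply: aut_comp => //; exact: sX_aut.
move=> y [[n h] [Up <-]]; have [[An n2] Hh] := US _ Up; have [s Hs] := Uo _ Up.
have [bh Oh] := Hh; have Hhi := autQ_finv Hh.
pose l2 : seq (X + qnn) := List.flat_map (fun i => match i with
   | inl (inl x) => inl ((sX (dfinv h)).1 x) :: map (fun u => inr (dfinv h u)) (suppM (F x))
   | inl (inr r) => [::]
   | inr r => [:: inr r] end) s.
exists l2 => g' Ag' Agr.
have [Pp Ep] := sd_pre Ag'.
exists (aut_mul g' (sX (dfinv g'.2)), g'.2); split => //.
apply: Hs => //.
have Hh' : is_autQ g'.2 by case: Ag' => _ [_ []].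
have [bh' _] := Hh'.
move=> [[x|r]|r] Hi /=.
- have e1 : sig (dfinv g'.2) (F x) = sig (dfinv h) (F x).
    apply: sig_supp => //; first exact: autQ_finv.
    move=> u hu.
    have Hin : List.In (inr (dfinv h u)) l2.
      apply/List.in_flat_map; exists (inl (inl x)); split => //; right.
      exact: (List.in_map (fun u => inr (dfinv h u))).
    have := Agr _ Hin; rewrite /= n2 /= finv_r //; case=> e.
    by rewrite -{1}e finv_l.
  have Hin : List.In (inl ((sX (dfinv h)).1 x)) l2.
    by apply/List.in_flat_map; exists (inl (inl x)); split => //; left.
  have := Agr _ Hin; rewrite /= e1; case=> ->.
  rewrite FG sig_comp // sig_id ?GF //; try exact: autQ_comp.
  by move=> u _ /=; rewrite finv_r.
- by rewrite n2 finv_r.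
- have Hin : List.In (inr r) l2 by apply/List.in_flat_map; exists (inr r); split => //; left.
  by have := Agr _ Hin; rewrite /= n2 /=; case=> e; rewrite /ev_autQ e.
Qed.

Lemma part_sd_inj : inj_on (prod_set (is_iso ltX dX) is_autQ) (sd_map sX).
Proof.
move=> [n h] [n' h'] [[An n2] Hh] [[An' n2'] Hh'] e.
have e2 : h = h'.
  apply: functional_extensionality => t.
  by have := f_equal (fun p => p.2 t) e; rewrite /= n2 n2'.
subst h'.
have e1 : n.1 = n'.1.
  apply: functional_extensionality => x.
  have := f_equal (fun p => p.1 ((sX (dfinv h)).1 x)) e; rewrite /=.
  rewrite FG sig_comp //; last exact: autQ_finv.
  rewrite sig_id ?GF //; first by apply: autQ_comp => //; apply: autQ_finv.
  by move=> u _ /=; rewrite finv_r //; case: Hh.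
by case: n n' e1 n2 n2' {An An' e Hh Hh'} => [a b] [a' b'] /= -> -> ->.
Qed.

Lemma part_sd_hom : hom_on (prod_set (is_iso ltX dX) is_autQ) (sd_mul sX) (@aut_mul X) (sd_map sX).
Proof.
move=> [n1 h1] [n2 h2] [[A1 e1] H1] [[A2 e2] H2]; simpl in H1, H2.
have [bs _] := sX_aut H1.
case: n1 n2 A1 A2 e1 e2 => [a1 b1] [a2 b2] A1 A2 /= e1 e2; subst b1 b2.
rewrite /sd_mul /sd_map /aut_mul /aut_inv /autQ_mul /=; f_equal.
  apply: functional_extensionality => x /=.
  have E : G (sig (h1 \o h2) (F x)) = (sX h1).1 (G (sig h2 (F x))) by rewrite /= FG sig_comp.
  by rewrite E finv_l.
apply: functional_extensionality => t /=.
by rewrite finv_l //; case: H1.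
Qed.

Lemma main_generic :
  pw_embedding (is_iso ltX dX) (@ev_aut X) (is_aut ltX dX) (@ev_aut X) (@i_prec X) /\
 hom_on (is_iso ltX dX) (@aut_mul X) (@aut_mul X) (@i_prec X) /\
 pw_continuous (is_aut ltX dX) (@ev_aut X) is_autQ ev_autQ (@pi_prec X) /\
 pw_openmap (is_aut ltX dX) (@ev_aut X) is_autQ ev_autQ (@pi_prec X) /\
 (forall phi, is_autQ phi -> exists g, is_aut ltX dX g /\ pi_prec g = phi) /\
 hom_on (is_aut ltX dX) (@aut_mul X) autQ_mul (@pi_prec X) /\
 (forall g, (is_aut ltX dX g /\ pi_prec g = id) <->
             (exists n, is_iso ltX dX n /\ i_prec n = g)) /\
 (exists s : (qnn -> qnn) -> aut_pair X,
     pw_continuous is_autQ ev_autQ (is_aut ltX dX) (@ev_aut X) s /\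
    hom_on is_autQ autQ_mul (@aut_mul X) s /\
    (forall phi, is_autQ phi -> pi_prec (s phi) = phi) /\
    pw_homeo (prod_set (is_iso ltX dX) is_autQ) (ev_prod (@ev_aut X) ev_autQ)
              (is_aut ltX dX) (@ev_aut X) (sd_map s) /\
    hom_on (prod_set (is_iso ltX dX) is_autQ) (sd_mul s) (@aut_mul X) (sd_map s)).
Proof.
split; first exact: part_emb.
split; first by [].
split; first exact: part_pi_cont.
split; first exact: part_pi_open.
split; first by move=> phi H; exists (sX phi); split => //; apply: sX_aut.
split; first by [].
split; first by move=> g; split => [[A e]|[n [[A e] <-]]]; [exists g|].
exists sX; split; first exact: part_s_cont.
split; first exact: part_s_hom.
split; first by [].
split; last exact: part_sd_hom.
split; first exact: part_sd_cont.
split; first exact: part_sd_open.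
split; first exact: part_sd_inj.
move=> y Ay; have [P E] := sd_pre Ay; by eexists; split; [exact: P|exact: E].
Qed.

End Main.

Local Close Scope ring_scope.

Theorem theorem4p5 (X : Type) (ltX : X -> X -> Prop) (dX : X -> X -> qnn) :
  is_U_prec ltX dX ->
  (* i^prec : Iso -> Aut is a continuous embedding and a homomorphism *)
  pw_embedding (is_iso ltX dX) (@ev_aut X) (is_aut ltX dX) (@ev_aut X) (@i_prec X) /\
  hom_on (is_iso ltX dX) (@aut_mul X) (@aut_mul X) (@i_prec X) /\
  (* pi^prec : Aut -> Aut(Q>=0) is a continuous open surjective homomorphism *)
  pw_continuous (is_aut ltX dX) (@ev_aut X) is_autQ ev_autQ (@pi_prec X) /\
  pw_openmap (is_aut ltX dX) (@ev_aut X) is_autQ ev_autQ (@pi_prec X) /\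
  (forall phi, is_autQ phi -> exists g, is_aut ltX dX g /\ pi_prec g = phi) /\
  hom_on (is_aut ltX dX) (@aut_mul X) autQ_mul (@pi_prec X) /\
  (* exactness: i^prec[Iso] = ker pi^prec *)
  (forall g, (is_aut ltX dX g /\ pi_prec g = id) <->
             (exists n, is_iso ltX dX n /\ i_prec n = g)) /\
  (* continuous homomorphic section inducing Aut ≅ Iso ⋊ Aut(Q>=0) *)
  (exists s : (qnn -> qnn) -> aut_pair X,
     pw_continuous is_autQ ev_autQ (is_aut ltX dX) (@ev_aut X) s /\
     hom_on is_autQ autQ_mul (@aut_mul X) s /\
     (forall phi, is_autQ phi -> pi_prec (s phi) = phi) /\
     pw_homeo (prod_set (is_iso ltX dX) is_autQ) (ev_prod (@ev_aut X) ev_autQ)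
              (is_aut ltX dX) (@ev_aut X) (sd_map s) /\
     hom_on (prod_set (is_iso ltX dX) is_autQ) (sd_mul s) (@aut_mul X) (sd_map s)).
Proof.
move=> [[c Hc] [Hlin [Hum [Hcv Hext]]]].
apply: (@main_generic X ltX dX (FX Hlin Hum Hcv Hext c) (GX Hlin Hum Hcv Hext c)).
- exact: GF.
- exact: FG.
- exact: G_d.
- exact: G_lt.
Qed.
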